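(* Let $A$ be a group and $H$ a subgroup of $A$ such that there exists an $H$-filtration of $A$. Let $B$ be an ERF group, $K$ a central subgroup of $B$, and $\phi: H \to K$ an isomorphism. Then there exist an $H$-filtration of $A$ and a $K$-filtration of $B$ which are $(H, K, \phi)$-compatible.
   Context: A filtration of a group $A$ is a family $\{A_\lambda\}_{\lambda\in\Lambda}$ of normal subgroups of finite index with $\bigcap A_\lambda=\{e\}$; for a subgroup $H$, it is an $H$-filtration if $\bigcap_\lambda HA_\lambda = H$. Given a $K$-filtration $\{B_\lambda\}_{\lambda\in\Lambda}$ of $B$ indexed by the same set, the two filtrations are $(H,K,\phi)$-compatible if for each $\lambda$ the map $hA_\lambda\mapsto\phi(h)B_\lambda$ is well defined and is an isomorphism $HA_\lambda/A_\lambda\to KB_\lambda/B_\lambda$. A subgroup is profinitely closed if it equals the intersection of all finite-index subgroups containing it; a group is ERF (extended residually finite) if all its subgroups are profinitely closed. *)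

(* Defs.v *)
From Stdlib Require Import List.

Record Grp := {
  gcar :> Type;
  gmul : gcar -> gcar -> gcar;
  gone : gcar;
  ginv : gcar -> gcar;
  gmulA : forall x y z, gmul x (gmul y z) = gmul (gmul x y) z;
  gmul1l : forall x, gmul gone x = x;
  gmul1r : forall x, gmul x gone = x;
  gmulVl : forall x, gmul (ginv x) x = gone;
  gmulVr : forall x, gmul x (ginv x) = gone
}.

Arguments gmul {g}.
Arguments gone {g}.
Arguments ginv {g}.

Section Defs.
Variable G : Grp.

Definition subgroup (S : G -> Prop) : Prop :=
  S gone /\ (forall x y, S x -> S y -> S (gmul x y)) /\ (forall x, S x -> S (ginv x)).

Definition normal (N : G -> Prop) : Prop :=
  subgroup N /\ forall g x, N x -> N (gmul (ginv g) (gmul x g)).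

Definition finite_index (S : G -> Prop) : Prop :=
  subgroup S /\ exists reps : list G, forall a, exists g, In g reps /\ S (gmul (ginv g) a).

Definition prodset (H N : G -> Prop) : G -> Prop :=
  fun x => exists h n, H h /\ N n /\ x = gmul h n.

Definition lcoset (g : G) (N : G -> Prop) : G -> Prop :=
  fun x => exists n, N n /\ x = gmul g n.

Definition same_set (X Y : G -> Prop) : Prop := forall x, X x <-> Y x.

Definition filtration (Lam : Type) (N : Lam -> G -> Prop) : Prop :=
  (forall l, normal (N l) /\ finite_index (N l)) /\
  (forall x, (forall l, N l x) -> x = gone).

Definition H_filtration (H : G -> Prop) (Lam : Type) (N : Lam -> G -> Prop) : Prop :=
  @filtration Lam N /\ (forall x, (forall l, prodset H (N l) x) <-> H x).

Definition central (K : G -> Prop) : Prop :=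
  subgroup K /\ forall k b, K k -> gmul k b = gmul b k.

Definition profinitely_closed (S : G -> Prop) : Prop :=
  forall x, (forall F, finite_index F -> (forall s, S s -> F s) -> F x) -> S x.

Definition ERF : Prop := forall S, subgroup S -> profinitely_closed S.

End Defs.

Arguments subgroup {G}.
Arguments normal {G}.
Arguments finite_index {G}.
Arguments prodset {G}.
Arguments lcoset {G}.
Arguments same_set {G}.
Arguments filtration {G Lam}.
Arguments H_filtration {G} H {Lam}.
Arguments central {G}.
Arguments profinitely_closed {G}.

(* phi : H -> K is a group isomorphism (phi is a function on the ambient
   carrier, only its restriction to H matters). *)
Definition group_iso_on {A B : Grp} (H : A -> Prop) (K : B -> Prop) (phi : A -> B) : Prop :=
  (forall h, H h -> K (phi h)) /\
  (forall h h', H h -> H h' -> phi (gmul h h') = gmul (phi h) (phi h')) /\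
  (forall h h', H h -> H h' -> phi h = phi h' -> h = h') /\
  (forall k, K k -> exists h, H h /\ phi h = k).

(* (H,K,phi)-compatibility: for every l, the map h A_l |-> phi(h) B_l on
   H A_l / A_l is well defined and is a group isomorphism onto K B_l / B_l.
   Elements of H A_l / A_l are cosets x A_l with x in H A_l, i.e. cosets
   h A_l with h in H; cosets are compared as sets. *)
Definition compatible {A B : Grp} (H : A -> Prop) (K : B -> Prop) (phi : A -> B)
  {Lam : Type} (NA : Lam -> A -> Prop) (NB : Lam -> B -> Prop) : Prop :=
  forall l,
    (forall h h', H h -> H h' ->
       same_set (lcoset h (NA l)) (lcoset h' (NA l)) ->
       same_set (lcoset (phi h) (NB l)) (lcoset (phi h') (NB l))) /\
    (* multiplicative: image of (h A_l)(h' A_l) = hh' A_l is (phi h B_l)(phi h' B_l) = phi h phi h' B_l *)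
    (forall h h', H h -> H h' ->
       same_set (lcoset (phi (gmul h h')) (NB l)) (lcoset (gmul (phi h) (phi h')) (NB l))) /\
    (forall h h', H h -> H h' ->
       same_set (lcoset (phi h) (NB l)) (lcoset (phi h') (NB l)) ->
       same_set (lcoset h (NA l)) (lcoset h' (NA l))) /\
    (forall y, prodset K (NB l) y ->
       exists h, H h /\ same_set (lcoset y (NB l)) (lcoset (phi h) (NB l))).

(* Main.v *)
Require Import Defs.
From Stdlib Require Import List Classical.

Section GT.
Context {G : Grp}.
Implicit Types x y z : G.
Lemma mA x y z : gmul x (gmul y z) = gmul (gmul x y) z. Proof. apply gmulA. Qed.
Lemma m1l x : gmul gone x = x. Proof. apply gmul1l. Qed.
Lemma m1r x : gmul x gone = x. Proof. apply gmul1r. Qed.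
Lemma mVl x : gmul (ginv x) x = gone. Proof. apply gmulVl. Qed.
Lemma mVr x : gmul x (ginv x) = gone. Proof. apply gmulVr. Qed.
Lemma mKl x y : gmul (ginv x) (gmul x y) = y.
Proof. rewrite mA, mVl, m1l. reflexivity. Qed.
Lemma mKVl x y : gmul x (gmul (ginv x) y) = y.
Proof. rewrite mA, mVr, m1l. reflexivity. Qed.
Lemma inv_uniq x y : gmul x y = gone -> ginv x = y.
Proof. intro E. rewrite <- (mKl x y), E, m1r. reflexivity. Qed.
Lemma inv_mul x y : ginv (gmul x y) = gmul (ginv y) (ginv x).
Proof. apply inv_uniq. rewrite <- mA, mKVl, mVr. reflexivity. Qed.
Lemma inv_inv x : ginv (ginv x) = x.
Proof. apply inv_uniq. apply mVl. Qed.
Lemma inv_one : ginv (@gone G) = gone.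
Proof. apply inv_uniq. apply m1l. Qed.
Lemma mcancel x y z : gmul x y = gmul x z -> y = z.
Proof. intro E. rewrite <- (mKl x y), E, mKl. reflexivity. Qed.
Lemma inv_uniq' x y : gmul x y = gone -> x = ginv y.
Proof. intro E. transitivity (gmul (gmul x y) (ginv y)).
  rewrite <- mA, mVr, m1r. reflexivity. rewrite E, m1l. reflexivity. Qed.
End GT.

Ltac gnorm := repeat progress (rewrite ?inv_mul, ?inv_inv, ?inv_one, ?m1l, ?m1r, ?mVl, ?mVr, <- ?mA, ?mKl, ?mKVl).
Ltac geq := gnorm; reflexivity.

Section Sub.
Context {G : Grp}.
Implicit Types x y z r : G.

Lemma sg1 (S : G -> Prop) : subgroup S -> S gone.
Proof. intros [? ?]; auto. Qed.
Lemma sgM (S : G -> Prop) x y : subgroup S -> S x -> S y -> S (gmul x y).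
Proof. intros [? [? ?]]; auto. Qed.
Lemma sgV (S : G -> Prop) x : subgroup S -> S x -> S (ginv x).
Proof. intros [? [? ?]]; auto. Qed.
Lemma sgVV (S : G -> Prop) x : subgroup S -> S (ginv x) -> S x.
Proof. intros Hs Hx. rewrite <- (inv_inv x). apply sgV; auto. Qed.
Lemma sg_div (S : G -> Prop) r x y : subgroup S -> S (gmul (ginv r) x) -> S (gmul (ginv r) y) ->
  S (gmul (ginv x) y).
Proof. intros Hs H1 H2.
  replace (gmul (ginv x) y) with (gmul (ginv (gmul (ginv r) x)) (gmul (ginv r) y)) by geq.
  apply sgM; auto. apply sgV; auto. Qed.

Lemma coset_eq (N : G -> Prop) g g' : subgroup N ->
  (same_set (lcoset g N) (lcoset g' N) <-> N (gmul (ginv g) g')).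
Proof. intros Hs. split.
  - intros E. destruct (proj2 (E g')) as [n [Hn En]]. exists gone. split. apply sg1; auto. geq.
    rewrite En. gnorm. auto.
  - intros Hn x. split.
    + intros [n [Hn' ->]]. exists (gmul (ginv (gmul (ginv g) g')) n). split.
      apply sgM; auto. apply sgV; auto. geq.
    + intros [n [Hn' ->]]. exists (gmul (gmul (ginv g) g') n). split.
      apply sgM; auto. geq.
Qed.

Lemma fi_super (S T : G -> Prop) : subgroup T -> (forall x, S x -> T x) -> finite_index S -> finite_index T.
Proof. intros HT HST [_ [R HR]]. split; auto. exists R. intros a. destruct (HR a) as [g [? ?]]. eauto. Qed.

Lemma sg_full : subgroup (fun _ : G => True).
Proof. repeat split. Qed.

Lemma fi_full : finite_index (fun _ : G => True).
Proof. split. apply sg_full. exists (gone :: nil). intros a. exists gone. simpl; auto. Qed.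

Lemma sg_inter (F1 F2 : G -> Prop) : subgroup F1 -> subgroup F2 -> subgroup (fun x => F1 x /\ F2 x).
Proof. intros H1 H2. split; [|split].
  - split; apply sg1; auto.
  - intros x y [? ?] [? ?]; split; apply sgM; auto.
  - intros x [? ?]; split; apply sgV; auto. Qed.
End Sub.

Lemma choose_list {T U : Type} (P : T -> U -> Prop) (l : list T) :
  exists L : list U, forall t, In t l -> (exists u, P t u) -> exists u, In u L /\ P t u.
Proof. induction l as [|a l [L HL]].
  - exists nil. intros t [].
  - destruct (classic (exists u, P a u)) as [[u Hu]|Hn].
    + exists (u :: L). intros t [<-|Ht] Hex. exists u; simpl; auto.
      destruct (HL t Ht Hex) as [v [? ?]]. exists v; simpl; auto.
    + exists L. intros t [<-|Ht] Hex. contradiction. auto.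
Qed.
Section FI.
Context {G : Grp}.
Implicit Types x y z r : G.

Lemma fi_inter (F1 F2 : G -> Prop) : finite_index F1 -> finite_index F2 -> finite_index (fun x => F1 x /\ F2 x).
Proof. intros [S1 [R1 H1]] [S2 [R2 H2]]. split. apply sg_inter; auto.
  destruct (choose_list (fun (t : G * G) (u : G) => F1 (gmul (ginv (fst t)) u) /\ F2 (gmul (ginv (snd t)) u))
     (list_prod R1 R2)) as [L HL].
  exists L. intros a. destruct (H1 a) as [r1 [I1 E1]]. destruct (H2 a) as [r2 [I2 E2]].
  destruct (HL (r1, r2) (in_prod _ _ _ _ I1 I2)) as [c [Ic [C1 C2]]]. exists a; simpl; auto.
  simpl in *. exists c. split; auto. split; eapply sg_div; eauto.
Qed.

Lemma sg_conj (F : G -> Prop) r : subgroup F -> subgroup (fun x => F (gmul (ginv r) (gmul x r))).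
Proof. intros HF. split; [|split].
  - replace (gmul (ginv r) (gmul gone r)) with (@gone G) by geq. apply sg1; auto.
  - intros x y Hx Hy. replace (gmul (ginv r) (gmul (gmul x y) r)) with
      (gmul (gmul (ginv r) (gmul x r)) (gmul (ginv r) (gmul y r))) by geq. apply sgM; auto.
  - intros x Hx. replace (gmul (ginv r) (gmul (ginv x) r)) with (ginv (gmul (ginv r) (gmul x r))) by geq.
    apply sgV; auto.
Qed.

Lemma fi_conj (F : G -> Prop) r : finite_index F -> finite_index (fun x => F (gmul (ginv r) (gmul x r))).
Proof. intros [HF [R HR]]. split. apply sg_conj; auto.
  exists (map (fun g => gmul r (gmul g (ginv r))) R). intros a.
  destruct (HR (gmul (ginv r) (gmul a r))) as [g [Ig Eg]].
  exists (gmul r (gmul g (ginv r))). split. apply (in_map (fun g => gmul r (gmul g (ginv r)))); auto.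
  replace (gmul (ginv r) (gmul (gmul (ginv (gmul r (gmul g (ginv r)))) a) r)) with
    (gmul (ginv g) (gmul (ginv r) (gmul a r))) by geq. auto.
Qed.

Lemma sg_biginter (l : list G) (Fam : G -> G -> Prop) : (forall r, In r l -> subgroup (Fam r)) ->
  subgroup (fun x => forall r, In r l -> Fam r x).
Proof. intros Hs. split; [|split].
  - intros r Ir. apply sg1; auto.
  - intros x y Hx Hy r Ir. apply sgM; auto.
  - intros x Hx r Ir. apply sgV; auto.
Qed.

Lemma fi_biginter (l : list G) (Fam : G -> G -> Prop) : (forall r, In r l -> finite_index (Fam r)) ->
  finite_index (fun x => forall r, In r l -> Fam r x).
Proof. induction l as [|a l IH]; intros Hf.
  - apply (fi_super (fun _ => True)). apply sg_biginter. intros r []. intros; simpl; tauto. apply fi_full.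
  - apply (fi_super (fun x => Fam a x /\ (forall r, In r l -> Fam r x))).
    apply sg_biginter. intros r Ir. apply Hf; auto.
    intros x [Ha Hl] r [<-|Ir]; auto.
    apply fi_inter. apply Hf; simpl; auto. apply IH. intros r Ir; apply Hf; simpl; auto.
Qed.

Definition core (F : G -> Prop) : G -> Prop := fun x => forall g, F (gmul (ginv g) (gmul x g)).

Lemma core_normal (F : G -> Prop) : subgroup F -> normal (core F).
Proof. intros HF. split. split; [|split].
  - intros g. replace (gmul (ginv g) (gmul gone g)) with (@gone G) by geq. apply sg1; auto.
  - intros x y Hx Hy g. apply (sg_conj F g HF); auto.
  - intros x Hx g. apply (sg_conj F g HF); auto.
  - intros g x Hx g'. replace (gmul (ginv g') (gmul (gmul (ginv g) (gmul x g)) g')) with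
      (gmul (ginv (gmul g g')) (gmul x (gmul g g'))) by geq. apply Hx.
Qed.

Lemma core_sub (F : G -> Prop) x : core F x -> F x.
Proof. intros Hx. specialize (Hx gone). revert Hx. gnorm. auto. Qed.

Lemma core_fi (F : G -> Prop) : finite_index F -> finite_index (core F).
Proof. intros HFi. pose proof HFi as [HF [R HR]].
  apply (fi_super (fun x => forall r, In r R -> F (gmul (ginv r) (gmul x r)))).
  apply core_normal; auto.
  - intros x Hx g. destruct (HR g) as [r [Ir Er]].
    replace (gmul (ginv g) (gmul x g)) with
      (gmul (ginv (gmul (ginv r) g)) (gmul (gmul (ginv r) (gmul x r)) (gmul (ginv r) g))) by geq.
    apply sgM; auto. apply sgV; auto. apply sgM; auto.
  - apply fi_biginter. intros r _. apply fi_conj; auto.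
Qed.

Lemma core_normal_sub (F N : G -> Prop) : normal N -> (forall x, N x -> F x) -> forall x, N x -> core F x.
Proof. intros [_ HN] HNF x Hx g. apply HNF, HN, Hx. Qed.
End FI.
Lemma sep {B : Grp} (S : B -> Prop) b : ERF B -> subgroup S -> ~ S b ->
  exists F, finite_index F /\ (forall s, S s -> F s) /\ ~ F b.
Proof. intros HE HS Hb. apply NNPP. intros Hn. apply Hb. apply (HE S HS). intros F Hfi Hsub.
  apply NNPP. intros HFb. apply Hn. exists F; auto. Qed.

Definition Kl {A B : Grp} (H : A -> Prop) (phi : A -> B) (N : A -> Prop) : B -> Prop :=
  fun y => exists h, H h /\ N h /\ phi h = y.

Section Iso.
Context {A B : Grp} (H : A -> Prop) (K : B -> Prop) (phi : A -> B).
Hypothesis HH : subgroup H.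
Hypothesis Hiso : group_iso_on H K phi.
Hypothesis HK : central K.

Lemma phi1 : phi gone = gone.
Proof. destruct Hiso as [_ [Hm _]]. symmetry. apply (mcancel (phi gone)).
  rewrite <- Hm, m1r, m1l; auto; apply sg1; auto. Qed.

Lemma phiV h : H h -> phi (ginv h) = ginv (phi h).
Proof. intros Hh. destruct Hiso as [_ [Hm _]]. apply inv_uniq'. rewrite <- Hm, mVl. apply phi1.
  apply sgV; auto. auto. Qed.

Lemma Kl_sg (N : A -> Prop) : subgroup N -> subgroup (Kl H phi N).
Proof. intros HN. destruct Hiso as [_ [Hm _]]. split; [|split].
  - exists gone. split. apply sg1; auto. split. apply sg1; auto. apply phi1.
  - intros x y [h [? [? <-]]] [h' [? [? <-]]]. exists (gmul h h'). split. apply sgM; auto.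
    split. apply sgM; auto. auto.
  - intros x [h [? [? <-]]]. exists (ginv h). split. apply sgV; auto. split. apply sgV; auto. apply phiV; auto.
Qed.

Lemma Kl_K (N : A -> Prop) y : Kl H phi N y -> K y.
Proof. intros [h [? [? <-]]]. apply Hiso; auto. Qed.

Lemma Kl_normal (N : A -> Prop) : subgroup N -> normal (Kl H phi N).
Proof. intros HN. split. apply Kl_sg; auto. intros g x Hx.
  destruct HK as [_ Hc]. rewrite (Hc x g (Kl_K N x Hx)). rewrite mKl. auto. Qed.

Lemma Kl_reps (N : A -> Prop) : finite_index N ->
  exists L : list B, forall y, K y -> exists k, In k L /\ Kl H phi N (gmul (ginv k) y).
Proof. intros [HN [R HR]].
  destruct (choose_list (fun r h => H h /\ N (gmul (ginv r) h)) R) as [L HL].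
  exists (map phi L). intros y Hy. destruct Hiso as [_ [Hm [_ Hs]]].
  destruct (Hs y Hy) as [h [Hh <-]]. destruct (HR h) as [r [Ir Er]].
  destruct (HL r Ir) as [h' [Ih' [Hh' Eh']]]. eauto.
  exists (phi h'). split. apply in_map; auto.
  exists (gmul (ginv h') h). repeat split. apply sgM; auto. apply sgV; auto.
  eapply sg_div; eauto.
  rewrite Hm, phiV; auto. apply sgV; auto.
Qed.

Hypothesis HE : ERF B.

Lemma step1 (S : B -> Prop) (L : list B) : subgroup S ->
  exists F, finite_index F /\ (forall s, S s -> F s) /\ (forall k, In k L -> ~ S k -> ~ F k).
Proof. intros HS. induction L as [|a L [F [HF [HSF HL]]]].
  - exists (fun _ => True). split. apply fi_full. split. intros; exact I. intros k [].
  - destruct (classic (S a)) as [Ha|Ha].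
    + exists F. split; auto. split; auto. intros k [<-|Ik]; auto.
    + destruct (sep S a HE HS Ha) as [Fa [HFa [HSa Hna]]].
      exists (fun x => F x /\ Fa x). split. apply fi_inter; auto. split. auto.
      intros k [<-|Ik] Hk [? ?]; auto. eapply HL; eauto.
Qed.

Definition Pgood (NA : A -> Prop) (b : B) (N : B -> Prop) :=
  normal N /\ finite_index N /\ (forall y, K y -> (N y <-> Kl H phi NA y)) /\
  (~ K b -> ~ prodset K N b).

Lemma CB (NA : A -> Prop) (b : B) : normal NA -> finite_index NA -> exists N, Pgood NA b N.
Proof. intros HNn HNfi. pose proof (proj1 HNn) as HNs.
  pose proof (Kl_sg NA HNs) as HKs. pose proof (Kl_normal NA HNs) as HKn.
  destruct (Kl_reps NA HNfi) as [L HL].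
  destruct (step1 _ L HKs) as [F1 [HF1 [HKF1 HLF1]]].
  assert (exists F2, finite_index F2 /\ (forall s, K s -> F2 s) /\ (~ K b -> ~ F2 b)) as [F2 [HF2 [HKF2 HbF2]]].
  { destruct (classic (K b)) as [Hb|Hb].
    - exists (fun _ => True). split. apply fi_full. split; auto.
    - destruct (sep K b HE (proj1 HK) Hb) as [F2 [? [? ?]]]. exists F2; auto. }
  set (F := fun x => F1 x /\ F2 x).
  assert (HF : finite_index F) by (apply fi_inter; auto).
  exists (core F). split. apply core_normal, HF. split. apply core_fi, HF. split.
  - intros y Hy. split.
    + intros Hc. destruct (core_sub F y Hc) as [Hy1 _].
      destruct (HL y Hy) as [k [Ik Hk]]. destruct (classic (Kl H phi NA k)) as [Kk|Kk].
      * replace y with (gmul k (gmul (ginv k) y)) by geq. apply sgM; auto.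
      * exfalso. apply (HLF1 k Ik Kk). replace k with (gmul y (ginv (gmul (ginv k) y))) by geq.
        apply sgM. apply HF1. auto. apply sgV. apply HF1. auto.
    + intros Hk. apply (core_normal_sub F _ HKn); auto. intros x Hx. split; auto.
      apply HKF2. apply (Kl_K NA); auto.
  - intros Hb [k [n [Hk [Hn ->]]]]. apply HbF2; auto. destruct (core_sub F n Hn) as [_ Hn2].
    apply sgM; auto. apply HF2.
Qed.
End Iso.
Theorem theorem3p7 (A : Grp) (H : A -> Prop) (B : Grp) (K : B -> Prop) (phi : A -> B) :
  subgroup H ->
  (exists (Lam0 : Type) (N0 : Lam0 -> A -> Prop), H_filtration H N0) ->
  ERF B ->
  central K ->
  group_iso_on H K phi ->
  exists (Lam : Type) (NA : Lam -> A -> Prop) (NB : Lam -> B -> Prop),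
    H_filtration H NA /\ H_filtration K NB /\ compatible H K phi NA NB.
Proof.
  intros HH [Lam0 [N0 [[HN0 Htriv0] Hcl0]]] HE HK Hiso.
  set (N1 := fun o : option Lam0 => match o with Some l => N0 l | None => fun _ : A => True end).
  assert (HN1 : forall o, normal (N1 o) /\ finite_index (N1 o)).
  { intros [l|]; simpl. apply HN0. split. split. apply sg_full. intros; exact I. apply fi_full. }
  set (Lam := {p : option Lam0 * B * (B -> Prop) | Pgood H K phi (N1 (fst (fst p))) (snd (fst p)) (snd p)}).
  assert (Hex : forall o b, exists p : Lam, fst (fst (proj1_sig p)) = o /\ snd (fst (proj1_sig p)) = b).
  { intros o b. destruct (HN1 o) as [Hn Hf].
    destruct (CB H K phi HH Hiso HK HE (N1 o) b Hn Hf) as [N HP].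
    exists (exist _ (o, b, N) HP). simpl. auto. }
  assert (Hiso' := Hiso). destruct Hiso' as [HHK [Hm [Hinj Hsurj]]].
  exists Lam, (fun p => N1 (fst (fst (proj1_sig p)))), (fun p => snd (proj1_sig p)).
  split; [|split].
  - split. split.
    + intros p. apply HN1.
    + intros x Hx. apply Htriv0. intros l. destruct (Hex (Some l) gone) as [p [Ep _]].
      specialize (Hx p). simpl in Hx. rewrite Ep in Hx. exact Hx.
    + intros x. split.
      * intros Hx. apply Hcl0. intros l. destruct (Hex (Some l) gone) as [p [Ep _]].
        specialize (Hx p). simpl in Hx. rewrite Ep in Hx. exact Hx.
      * intros Hx p. exists x, gone. split; auto. split. apply sg1, (HN1 _). rewrite m1r; auto.
  - split. split.
    + intros [[[o b] N] HP]. simpl. destruct HP as [Hn [Hf _]]. auto.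
    + intros x Hx. apply NNPP. intros Hx1. destruct (classic (K x)) as [Kx|Kx].
      * destruct (Hsurj x Kx) as [h [Hh <-]].
        assert (h <> gone) as Hh1 by (intros ->; apply Hx1; apply (phi1 H K phi); auto).
        assert (exists l, ~ N0 l h) as [l Hl].
        { apply NNPP. intros Hn. apply Hh1, Htriv0. intros l. apply NNPP. intros Hl. apply Hn; eauto. }
        destruct (Hex (Some l) (phi h)) as [[[[o b] N] [Hn [Hf [Hiff Hpk]]]] [Eo Eb]].
        simpl in *. subst o b. specialize (Hx (exist _ (Some l, phi h, N) (conj Hn (conj Hf (conj Hiff Hpk))))).
        simpl in Hx. apply (Hiff _ Kx) in Hx. destruct Hx as [h' [Hh' [Nh' E]]].
        apply Hl. simpl in Nh'. rewrite <- (Hinj h' h); auto.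
      * destruct (Hex None x) as [[[[o b] N] [Hn [Hf [Hiff Hpk]]]] [Eo Eb]].
        simpl in *. subst o b. specialize (Hx (exist _ (None, x, N) (conj Hn (conj Hf (conj Hiff Hpk))))).
        simpl in Hx. apply (Hpk Kx). exists gone, x. split. apply sg1, (proj1 HK). split; auto.
        rewrite m1l; auto.
    + intros x. split.
      * intros Hx. apply NNPP. intros Kx.
        destruct (Hex None x) as [[[[o b] N] [Hn [Hf [Hiff Hpk]]]] [Eo Eb]].
        simpl in *. subst o b. specialize (Hx (exist _ (None, x, N) (conj Hn (conj Hf (conj Hiff Hpk))))).
        simpl in Hx. apply (Hpk Kx). exact Hx.
      * intros Hx [p HP]. simpl. destruct HP as [Hn [Hf _]]. exists x, gone. split; auto. split. apply sg1, Hn. rewrite m1r; auto.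
  - intros [[[o b] N] HP]. simpl. destruct HP as [Hn [Hf [Hiff Hpk]]].
    pose proof (proj1 (proj1 (HN1 o))) as HMs. pose proof (proj1 Hn) as HNs.
    split; [|split; [|split]].
    + intros h h' Hh Hh' E. apply coset_eq; auto. apply coset_eq in E; auto.
      rewrite <- (phiV H K phi), <- Hm; auto. 2: apply sgV; auto.
      apply Hiff. apply HHK. apply sgM; auto. apply sgV; auto.
      exists (gmul (ginv h) h'). split; auto. apply sgM; auto. apply sgV; auto.
    + intros h h' Hh Hh'. rewrite Hm; auto. intros x; tauto.
    + intros h h' Hh Hh' E. apply coset_eq; auto. apply coset_eq in E; auto.
      rewrite <- (phiV H K phi), <- Hm in E; auto. 2: apply sgV; auto.
      assert (Hk : H (gmul (ginv h) h')) by (apply sgM; auto; apply sgV; auto).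
      apply Hiff in E. 2: apply HHK; auto.
      destruct E as [h'' [Hh'' [Nh'' E]]]. rewrite <- (Hinj h'' _ Hh'' Hk E). auto.
    + intros y [k [n [Hk [Hn' ->]]]]. destruct (Hsurj k Hk) as [h [Hh <-]]. exists h. split; auto.
      apply coset_eq; auto. replace (gmul (ginv (gmul (phi h) n)) (phi h)) with (ginv n) by geq.
      apply sgV; auto.
Qed.
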